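(* Let $(x_0,x_1)$ be a state of nonnegative integers with $ch(x_0,x_1)\geq 1$ and $x_1\geq x_0-1\geq 1$. Then there exists a legal question $(a_0,a_1)$ such that, whichever answer Carole gives, the next state $(y_0,y_1)$ satisfies (i) $\lfloor x_0/2\rfloor\leq y_0\leq\lceil x_0/2\rceil$; (ii) $y_1\geq y_0-1$; (iii) $ch(y_0,y_1)\geq ch(x_0,x_1)-1$.
   Context: Liar game with $1$ lie: a state is a pair $(x_0,x_1)$ of nonnegative integers; a legal question is a pair $(a_0,a_1)$ of integers with $0\leq a_i\leq x_i$; after Carole's answer Y the next state is $(a_0,\,a_1+x_0-a_0)$, after N it is $(x_0-a_0,\,x_1-a_1+a_0)$. Weight: $wt_q(x_0,x_1)=(q+1)x_0+x_1$. The character $ch(x_0,x_1)$ is the maximum integer $q\geq 0$ such that $wt_q(x_0,x_1)\geq 2^q$. *)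

(* Defs.v *)
From mathcomp Require Import all_boot.
Set Implicit Arguments. Unset Strict Implicit. Unset Printing Implicit Defensive.

(* Liar game with 1 lie. States and questions are pairs of nats. *)
Definition legal (x0 x1 a0 a1 : nat) : bool := (a0 <= x0) && (a1 <= x1).

(* next state after answer Y (b = true) or N (b = false) *)
Definition next_state (x0 x1 a0 a1 : nat) (b : bool) : nat * nat :=
  if b then (a0, a1 + (x0 - a0)) else (x0 - a0, x1 - a1 + a0).

Definition wt (q x0 x1 : nat) : nat := q.+1 * x0 + x1.

(* No q >= x0+x1+2
   satisfies the inequality, so the maximum over q < x0+x1+2 is the true
   maximum (when some q qualifies, i.e. x0+x1 >= 1; for the state (0,0)
   no q qualifies and this returns 0). *)
Definition ch (x0 x1 : nat) : nat :=
  \max_(q < (x0 + x1).+2 | 2 ^ q <= wt q x0 x1) q.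

(* Main.v *)
Require Import Defs.
From mathcomp Require Import all_boot.
From mathcomp Require Import zify.

Lemma ch_spec x0 x1 : 0 < ch x0 x1 -> 2 ^ ch x0 x1 <= wt (ch x0 x1) x0 x1.
Proof.
have : ch x0 x1 = 0 \/ 2 ^ ch x0 x1 <= wt (ch x0 x1) x0 x1.
  rewrite /ch; apply: (big_ind (fun v => v = 0 \/ 2 ^ v <= wt v x0 x1)).
  - by left.
  - move=> a b Ha Hb; rewrite /maxn; case: (ltnP a b) => H.
    + by [].
    + by [].
  - by move=> i Hi; right.
by case=> [->|].
Qed.

Lemma sq_le_pow n : (n + 4) * (n + 4) <= 2 ^ (n + 4).
Proof.
elim: n => [|n IH]; first by [].
rewrite addSn expnS; nia.
Qed.

Lemma pow_bound k a b : 2 ^ k <= wt k a b -> k < (a + b).+2.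
Proof.
rewrite /wt => H; rewrite ltnNge; apply/negP => Hk.
case: k H Hk => [|[|[|[|n]]]] H Hk.
- lia.
- lia.
- rewrite !expnS expn0 in H; nia.
- rewrite !expnS expn0 in H; nia.
- have := sq_le_pow n. rewrite (_ : n + 4 = n.+4); last by rewrite addn4. move=> HH. nia.
Qed.

Lemma ch_ge k a b : 2 ^ k <= wt k a b -> k <= ch a b.
Proof.
move=> H; have Hk := pow_bound k a b H.
exact: (@leq_bigmax_cond _ (fun i : 'I_(a + b).+2 => 2 ^ i <= wt i a b) (fun i => nat_of_ord i) (Ordinal Hk) H).
Qed.

Theorem lemma13 (x0 x1 : nat) :
  1 <= ch x0 x1 -> 2 <= x0 -> x0 <= x1 + 1 ->
  exists a0 a1 : nat, legal x0 x1 a0 a1 /\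
    forall (b : bool) (y0 y1 : nat), next_state x0 x1 a0 a1 b = (y0, y1) ->
      [/\ x0./2 <= y0 <= uphalf x0,
          y0 <= y1 + 1 &
          ch x0 x1 <= ch y0 y1 + 1].
Proof.
move=> Hch H2 Hx.
have Hspec := ch_spec x0 x1 Hch.
move: Hch Hspec; case: (ch x0 x1) => [//|k] _ Hspec.
rewrite /wt expnS in Hspec.
set P := 2 ^ k in Hspec.
have Hx0 := odd_double_half x0.
have Hup : uphalf x0 = odd x0 + x0./2 by rewrite uphalf_half.
set e := odd x0 in Hx0 Hup.
set h := x0./2 in Hx0 Hup.
have He : e <= 1 by case: (e).
have Hke : k * e <= x1 + 1.
  case: (posnP e) => He0; first by rewrite He0 muln0.
  rewrite leqNgt; apply/negP => Hbad.
  have Hk4 : 4 <= k by nia.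
  have := sq_le_pow (k - 4). have -> : k - 4 + 4 = k by lia.
  rewrite -/P => HH.
  move: He0 Hbad; case: (e) => // _ Hbad; rewrite muln1 in Hbad.
  nia.
have Hm := odd_double_half (x1 + k * e).
set f := odd (x1 + k * e) in Hm.
set m := (x1 + k * e)./2 in Hm.
have Hf : f <= 1 by case: (f).
exists h, m; split.
  rewrite /legal; apply/andP; split; lia.
have HY : P <= k.+1 * h + (m + (x0 - h)) by nia.
have HN : P <= k.+1 * (x0 - h) + (x1 - m + h) by nia.
case=> y0 y1 /= [<- <-]; split.
- apply/andP; split; lia.
- lia.
- by rewrite addn1 ltnS; apply: (ch_ge k); rewrite /wt; exact: HY.
- apply/andP; split; lia.
- lia.
- by rewrite addn1 ltnS; apply: (ch_ge k); rewrite /wt; exact: HN.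
Qed.
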